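(* Let $m\ge1$, $n=2m$, $s=2^m-1$, $t=2^m+1$. Let $\alpha$ be a generator of $\mathbb{F}_{2^n}^\times$, $\beta=\alpha^t$ (a generator of $\mathbb{F}_{2^m}^\times$) and $\gamma=\alpha^s$ (an element of order $2^m+1$), and let $B_{i,j}=\mathrm{tr}_{\mathbb{F}_{2^n}/\mathbb{F}_2}(\beta^i\gamma^j)$ for $(i,j)\in\mathbb{Z}_s\times\mathbb{Z}_t$ (the trace De Bruijn torus), whose $j$-th column is $(B_{i,j})_{0\le i<s}$. Then for each integer $i$, the shifted sequence $\mathsf{DB}_\beta^{[i]}$ appears as a column of $B$ if and only if the polynomial $x^2+\beta^i x+1$ is irreducible over $\mathbb{F}_{2^m}$. Moreover, such a column occurs with multiplicity two, corresponding to the two indices $j$ and $-j\in\mathbb{Z}/t\mathbb{Z}$ satisfying $\mathrm{tr}_{\mathbb{F}_{2^n}/\mathbb{F}_{2^m}}(\gamma^j)=\beta^i$.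
   Context: $\mathrm{tr}_{K/F}$ denotes the field trace. $\mathsf{DB}_\beta=(\mathrm{tr}_{\mathbb{F}_{2^m}/\mathbb{F}_2}(\beta^k))_{0\le k<s}$ is the standard trace De Bruijn sequence, and $\mathsf{DB}_\beta^{[i]}=(\mathrm{tr}_{\mathbb{F}_{2^m}/\mathbb{F}_2}(\beta^{i+k}))_{0\le k<s}$ its cyclic shift by $i$ (indices mod $s$). *)

(* Defs.v *)
From HB Require Import structures.
From mathcomp Require Import all_boot all_order all_algebra all_field.
Set Implicit Arguments. Unset Strict Implicit. Unset Printing Implicit Defensive.
Import GRing.Theory.
Local Open Scope ring_scope.

(* Absolute trace tr_{F_{2^d}/F_2}(x) = sum_{l<d} x^(2^l), computed in a field
   L of characteristic 2 containing F_{2^d}. *)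
Definition trace2 (L : fieldType) (d : nat) (x : L) : L :=
  \sum_(l < d) x ^+ (2 ^ l).

Definition trace_rel (L : fieldType) (m : nat) (x : L) : L :=
  x + x ^+ (2 ^ m).

Definition torus_col (L : fieldType) (m : nat) (beta gamma : L) (j : nat)
  : 'I_(2 ^ m - 1) -> L :=
  fun k => trace2 (2 * m) (beta ^+ k * gamma ^+ j).

Definition DB_shift (L : fieldType) (m : nat) (beta : L) (i : int)
  : 'I_(2 ^ m - 1) -> L :=
  fun k => trace2 m (beta ^ (i + (k : nat)%:Z)).
Arguments torus_col {L} m beta gamma j _.
Arguments DB_shift {L} m beta i _.

(* Main.v *)
Require Import Defs.
From HB Require Import structures.
From mathcomp Require Import all_boot all_order all_algebra all_field.
From mathcomp Require Import zify ring.
From Stdlib Require Import FunctionalExtensionality.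
Import GRing.Theory.
Local Open Scope ring_scope.

Section Char2.
Variable (F : fieldType) (ch : 2 \in [pchar F]).

Lemma frob2 (x y : F) l : (x + y) ^+ (2 ^ l) = x ^+ (2 ^ l) + y ^+ (2 ^ l).
Proof.
elim: l => [|l IH]; first by rewrite !expr1.
rewrite expnSr !exprM IH sqrrD.
by rewrite (mulrn_pchar ch) addr0.
Qed.

Lemma trace2D d (x y : F) : trace2 d (x + y) = trace2 d x + trace2 d y.
Proof. by rewrite /trace2 -big_split /=; apply: eq_bigr => l _; rewrite frob2. Qed.

Lemma sq1_pchar2 (z : F) : z * z = 1 -> z = 1.
Proof.
move=> h.
have : (z + 1) ^+ 2 = 0.
  by rewrite sqrrD mulr1 (mulrn_pchar ch) addr0 expr1n expr2 h (addrr_pchar2 ch).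
move/eqP; rewrite expf_eq0 /= addr_eq0 (oppr_pchar2 ch) => /eqP //.
Qed.

Lemma eq_pchar2 (x y : F) : (x + y == 0) = (x == y).
Proof. by rewrite addr_eq0 (oppr_pchar2 ch). Qed.

End Char2.
Arguments frob2 {F} ch x y l.
Arguments trace2D {F} ch d x y.
Arguments sq1_pchar2 {F} ch {z} _.
Arguments eq_pchar2 {F} ch x y.
Lemma root_exists (K L : finFieldType) (f : {rmorphism K -> L}) (p : {poly K}) :
  irreducible_poly p -> p \is monic -> size p = 3%N -> #|L| = (#|K| ^ 2)%N ->
  exists r, root (map_poly f p) r.
Proof.
move=> hirr hmon hsz hcard.
have mi : monic_irreducible_poly p := (hirr, hmon).
pose Q := {poly %/ p with mi}.
have cardQ : #|Q| = #|L| by rewrite card_qfpoly hsz.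
have H : ('qX : Q) ^+ #|L| = 'qX by rewrite -cardQ expf_card.
have H2 : Pdiv.Ring.rmodp ('X^#|L| : {poly K}) p = Pdiv.Ring.rmodp ('X : {poly K}) p.
  have := congr1 (fun x : Q => (x : {poly K})) H => /=.
  rewrite poly_of_qpolyX qpolyXE ?hsz // (mk_monicE mi).
  by [].
have dv : p %| 'X^#|L| - 'X.
  rewrite dvdpE /Pdiv.Ring.rdvdp -Pdiv.IdomainMonic.modpE // modpD modpN.
  by rewrite !Pdiv.IdomainMonic.modpE // H2 subrr.
have := dvdp_map f p ('X^#|L| - 'X).
rewrite dv rmorphB /= map_polyXn map_polyX finField_genPoly => dv2.
have [ms Hms] := @dvdp_prod_XsubC _ _ (index_enum L) id _ dv2.
have := eqp_size Hms; rewrite size_map_poly hsz size_prod_XsubC.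
case E: (mask ms (index_enum L)) => [|x rs] //= => _.
exists x; rewrite (eqp_root Hms) root_prod_XsubC E mem_head //.
Qed.

Section Main.
Variables (m : nat) (hm : (1 <= m)%N) (L : finFieldType) (hL : #|L| = (2 ^ (2 * m))%N)
  (K : finFieldType) (hK : #|K| = (2 ^ m)%N) (f : {rmorphism K -> L})
  (alpha : L) (halpha : (2 ^ (2 * m) - 1)%N.-primitive_root alpha).

Local Notation q := (2 ^ m)%N.
Local Notation s := (2 ^ m - 1)%N.
Local Notation t := (2 ^ m + 1)%N.
Local Notation beta := (alpha ^+ t).
Local Notation gamma := (alpha ^+ s).

Lemma q_gt1 : (1 < q)%N.
Proof. by rewrite -{1}(expn0 2) ltn_exp2l. Qed.

Lemma hst : (2 ^ (2 * m) - 1 = s * t)%N.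
Proof.
have := q_gt1; rewrite mulnC expnM.
move: (2 ^ m)%N => x hx; nia.
Qed.

Lemma chL : 2 \in [pchar L].
Proof. exact: card_finPcharP hL _. Qed.

Lemma chK : 2 \in [pchar K].
Proof. exact: card_finPcharP hK _. Qed.

Lemma s_gt0 : (0 < s)%N. Proof. by have := q_gt1; rewrite subn_gt0. Qed.
Lemma t_gt0 : (0 < t)%N. Proof. by rewrite addn1. Qed.

Lemma hbeta : s.-primitive_root beta.
Proof.
have := exp_prim_root halpha t; rewrite hst.
by rewrite gcdnMl mulnK // t_gt0.
Qed.

Lemma hgamma : t.-primitive_root gamma.
Proof.
have := exp_prim_root halpha s; rewrite hst.
by rewrite gcdnMr mulKn // s_gt0.
Qed.

Lemma beta_q : beta ^+ q = beta.
Proof.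
have e : q = s.+1 by rewrite subn1 prednK // ltnW // q_gt1.
have := prim_expr_order hbeta; move: (beta) => b hb.
by rewrite e exprSr hb mul1r.
Qed.

Lemma gamma_t j : (gamma ^+ j) ^+ q * gamma ^+ j = 1.
Proof.
by rewrite -exprSr -[q.+1]addn1 exprAC (prim_expr_order hgamma) expr1n.
Qed.

Lemma beta_neq0 : beta != 0.
Proof.
apply/negP => /eqP h; have := prim_expr_order hbeta.
by rewrite h expr0n; case: (s) s_gt0 => // n _ /eqP; rewrite eq_sym oner_eq0.
Qed.

Lemma K_q (k : K) : k ^+ q = k.
Proof. by rewrite -hK expf_card. Qed.


Lemma trace0 d : trace2 d (0 : L) = 0.
Proof. by rewrite /trace2 big1 // => l _; rewrite expr0n expn_eq0. Qed.

Lemma trace_split (b g : L) : b ^+ q = b ->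
  trace2 (2 * m) (b * g) = trace2 m (b * trace_rel m g).
Proof.
move=> hb; rewrite /trace2 /trace_rel mul2n -addnn big_split_ord /= mulrDr.
rewrite [RHS](eq_bigr (fun l : 'I_m => (b * g) ^+ (2 ^ l) + (b * g ^+ q) ^+ (2 ^ l))); last first.
  by move=> l _; rewrite frob2 // chL.
rewrite big_split /=; congr (_ + _); apply: eq_bigr => l _.
by rewrite expnD exprM exprMn hb.
Qed.

Lemma nondeg (d : L) : (forall k : 'I_s, trace2 m (beta ^+ k * d) = 0) -> d = 0.
Proof.
move=> H; apply/eqP/negPn/negP => dn0.
pose P := \sum_(l < m) d ^+ (2 ^ l) *: ('X^(2 ^ l) : {poly L}).
have hP x : P.[x] = trace2 m (x * d).
  rewrite horner_sum /trace2; apply: eq_bigr => l _.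
  by rewrite hornerZ hornerXn exprMn mulrC.
have cP k : P`_k = \sum_(l < m | (2 ^ l == k)%N) d ^+ (2 ^ l) by rewrite coef_sumMXn.
have hm1 : (m.-1 < m)%N by rewrite prednK.
have Pn0 : P != 0.
  apply/eqP => /(congr1 (fun p : {poly L} => p`_(2 ^ m.-1))); rewrite cP coef0.
  rewrite (big_pred1 (Ordinal hm1)); last by move=> l /=; rewrite eqn_exp2l.
  by move/eqP; rewrite expf_eq0 (negbTE dn0) andbF.
have szP : (size P <= (2 ^ m.-1).+1)%N.
  apply/leq_sizeP => k hk; rewrite cP big_pred0 // => l /=.
  apply/negbTE/eqP => e; move: hk (ltn_ord l); rewrite -e ltn_exp2l //.
  move: hm; lia.
pose rs := 0 :: [seq beta ^+ k | k <- iota 0 s].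
have : (size rs < size P)%N.
  apply: max_poly_roots => //=.
    rewrite rootE hP mul0r trace0 eqxx /=.
    apply/allP => x /mapP [k hk ->]; rewrite rootE hP.
    by rewrite mem_iota add0n in hk; rewrite (H (Ordinal hk)).
  apply/andP; split.
    apply/mapP => [[k _ /esym/eqP]]; rewrite expf_eq0 (negbTE beta_neq0) andbF //.
  rewrite map_inj_in_uniq ?iota_uniq // => a b ha hb /eqP.
  rewrite (eq_prim_root_expr hbeta) !modn_small // => [/eqP //||];
    by [rewrite mem_iota add0n in ha | rewrite mem_iota add0n in hb].
rewrite /= size_map size_iota.
have := q_gt1; move: szP; rewrite -(prednK hm) expnS /=; lia.
Qed.

Lemma colEq (i : int) (j : nat) :
  (forall k : 'I_s, torus_col m beta gamma j k = DB_shift m beta i k) <->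
  trace_rel m (gamma ^+ j) = beta ^ i.
Proof.
have key k : torus_col m beta gamma j k - DB_shift m beta i k =
    trace2 m (beta ^+ k * (trace_rel m (gamma ^+ j) - beta ^ i)).
  rewrite /torus_col /DB_shift trace_split; last by rewrite exprAC beta_q.
  rewrite expfzDr ?beta_neq0 // -exprnP mulrBr !(oppr_pchar2 chL) trace2D; last exact: chL.
  by rewrite [beta ^ i * _]mulrC.
split.
  move=> H; apply/eqP; rewrite -subr_eq0; apply/eqP/nondeg => k.
  by rewrite -key H subrr.
by move=> e k; apply/eqP; rewrite -subr_eq0 key e subrr mulr0 trace0.
Qed.


Definition PP (b : K) : {poly K} := 'X^2 + b *: 'X + 1.

Lemma PP_small (b : K) : (size (b *: 'X + 1 : {poly K})%R < 3)%N.
Proof.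
apply: leq_ltn_trans (size_polyD _ _) _; rewrite gtn_max size_poly1 andbT.
by apply: leq_ltn_trans (size_scale_leq _ _) _; rewrite size_polyX.
Qed.

Lemma PP_size b : size (PP b) = 3%N.
Proof. by rewrite /PP -addrA size_addl size_polyXn // PP_small. Qed.

Lemma PP_monic b : PP b \is monic.
Proof. by rewrite monicE /PP -addrA lead_coefDl ?lead_coefXn // size_polyXn PP_small. Qed.

Lemma PP_root b r : root (map_poly f (PP b)) r = (r ^+ 2 + f b * r + 1 == 0).
Proof.
by rewrite /root /PP !rmorphD /= map_polyXn map_polyZ map_polyX rmorph1 !hornerE.
Qed.

Lemma PP_rootK b k : root (PP b) k = (f k ^+ 2 + f b * f k + 1 == 0).
Proof. by rewrite -PP_root /root horner_map fmorph_eq0. Qed.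

Lemma inK (r : L) : r ^+ q = r -> exists k, f k = r.
Proof.
move=> hr.
have := congr1 (map_poly f) (finField_genPoly K).
rewrite rmorphB /= map_polyXn map_polyX rmorph_prod /= => e.
have := congr1 (fun p => p.[r]) e; rewrite /= !hornerE hK hr subrr horner_prod.
move/esym/eqP/prodf_eq0 => [k _]; rewrite map_polyXsubC hornerXsubC subr_eq0 => /eqP ->.
by exists k.
Qed.

Lemma noRootK b : irreducible_poly (PP b) -> forall k, ~~ root (PP b) k.
Proof.
move=> hirr k; apply/negP => hk.
have := hirr.2 ('X - k%:P); rewrite size_XsubC dvdp_XsubCl hk.
by move=> /(_ isT isT) /eqp_size; rewrite size_XsubC PP_size.
Qed.

Lemma Bdir1 (b : K) : irreducible_poly (PP b) ->
  exists j : 'I_t, trace_rel m (gamma ^+ j) = f b.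
Proof.
move=> hirr.
have hcard : #|L| = (#|K| ^ 2)%N by rewrite hL hK -expnM mulnC.
have [r hr] := @root_exists _ _ f _ hirr (PP_monic b) (PP_size b) hcard.
move: hr; rewrite PP_root => /eqP hr.
set c := f b in hr *.
have cq : c ^+ q = c by rewrite /c -rmorphXn K_q.
set y := r ^+ q.
have hy : y ^+ 2 + c * y + 1 = 0.
  have := congr1 (fun z => z ^+ q) hr; rewrite /= !(frob2 chL) [(c * r) ^+ _]exprMn cq expr1n.
  by rewrite expr0n expn_eq0 /= exprAC.
have hfac : (y + r) * (y + (c + r)) = 0.
  have e : (y + r) * (y + (c + r)) =
    (y ^+ 2 + c * y + 1) + (r ^+ 2 + c * r + 1) + (y * r) *+ 2 - 2%:R by ring.
  by rewrite e hy hr (mulrn_pchar chL) (pcharf0 chL) !addr0 subr0.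
move/eqP: hfac; rewrite mulf_eq0 !(eq_pchar2 chL) => /orP [] /eqP hyr.
  have [k hk] := inK _ hyr.
  have := noRootK _ hirr k; rewrite PP_rootK hk -/c hr eqxx //.
have hr1 : r ^+ t = 1.
  rewrite exprD expr1 -/y hyr.
  have e : (c + r) * r = (r ^+ 2 + c * r + 1) - 1 by ring.
  by rewrite e hr sub0r (oppr_pchar2 chL).
have hrN : r ^+ (2 ^ (2 * m) - 1) = 1 by rewrite hst mulnC exprM hr1 expr1n.
have [[e _] /= he] := prim_rootP halpha hrN.
have : (2 ^ (2 * m) - 1 %| e * t)%N by rewrite (prim_order_dvd halpha) exprM -he hr1.
rewrite hst dvdn_pmul2r ?t_gt0 // => /dvdnP [e' he'].
exists (Ordinal (ltn_pmod e' t_gt0)) => /=.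
rewrite (expr_mod _ (prim_expr_order hgamma)) -exprM mulnC -he' -he.
by rewrite /trace_rel -/y hyr addrCA (addrr_pchar2 chL) addr0.
Qed.

Lemma Bdir2 (b : K) (j : nat) : f b != 0 -> trace_rel m (gamma ^+ j) = f b ->
  irreducible_poly (PP b).
Proof.
move=> cn0 hj.
apply: cubic_irreducible; first by rewrite PP_size.
move=> k; apply/negP; rewrite PP_rootK => /eqP hy.
have hx := gamma_t j.
move: hj hx; rewrite /trace_rel; set x := gamma ^+ j => hj hx.
have hyq : f k ^+ q = f k by rewrite -rmorphXn K_q.
have : (f k + x) * (f k + x ^+ q) = 0.
  have e : (f k + x) * (f k + x ^+ q) = f k ^+ 2 + (x + x ^+ q) * f k + x ^+ q * x by ring.
  by rewrite e hx hj.
move/eqP; rewrite mulf_eq0 !(eq_pchar2 chL) => /orP [] /eqP e.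
  rewrite -e hyq e in hx; have x1 := sq1_pchar2 chL hx.
  by move: cn0; rewrite -hj -e hyq e x1 (addrr_pchar2 chL) eqxx.
have := congr1 (fun z => z ^+ q) hx; rewrite /= exprMn -e hyq e expr1n => /(sq1_pchar2 chL) xq1.
rewrite xq1 mul1r in hx.
by move: cn0; rewrite -hj xq1 hx (addrr_pchar2 chL) eqxx.
Qed.


Lemma main_sec :
  let s := (2 ^ m - 1)%N in
  let t := (2 ^ m + 1)%N in
  let beta := alpha ^+ t in
  let gamma := alpha ^+ s in
  forall (i : int) (b : K), f b = beta ^ i ->
    ((exists j : 'I_t, torus_col m beta gamma j = DB_shift m beta i)
       <-> irreducible_poly ('X^2 + b *: 'X + 1 : {poly K}))
    /\
    (irreducible_poly ('X^2 + b *: 'X + 1 : {poly K}) ->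
       exists j0 j1 : 'I_t,
         [/\ j0 != j1, (j1 : nat) = ((t - j0) %% t)%N,
             [set j : 'I_t | [forall k, torus_col m beta gamma j k == DB_shift m beta i k]]
               = [set j0; j1]
           & forall j : 'I_t,
               torus_col m beta gamma j = DB_shift m beta i
               <-> trace_rel m (gamma ^+ j) = beta ^ i]).
Proof.
move=> s' t' beta' gamma'; rewrite /gamma' /beta' /t' /s' => i b hb.
have E : ('X^2 + b *: 'X + 1 : {poly K}) = PP b by [].
rewrite E.
have colF (j : nat) : torus_col m beta gamma j = DB_shift m beta i <->
    trace_rel m (gamma ^+ j) = beta ^ i.
  split; first by move=> e; apply/colEq => k; rewrite e.
  by move/colEq => H; apply: functional_extensionality => k; exact: H k.
have hc : f b != 0 by rewrite hb expfz_neq0 // beta_neq0.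
split.
  split; first by case=> j /colF hj; apply: (@Bdir2 b j) hc _; rewrite hj hb.
  by move=> hirr; have [j hj] := Bdir1 _ hirr; exists j; apply/colF; rewrite hj hb.
move=> hirr; have [j0 hj0] := Bdir1 _ hirr; rewrite hb in hj0.
have j0n0 : (0 < j0)%N.
  rewrite lt0n; apply/negP => /eqP e0.
  by move: hc; rewrite hb -hj0 e0 /trace_rel expr0 expr1n (addrr_pchar2 chL) eqxx.
have hj0t := ltn_ord j0.
pose j1 := Ordinal (ltn_pmod (t - j0) t_gt0) : 'I_t.
have j1v : (j1 : nat) = (t - j0)%N by rewrite /= modn_small //; lia.
set x := gamma ^+ j0 in hj0.
have hxq := gamma_t j0; rewrite -/x in hxq.
have xn0 : x != 0.
  by apply/eqP => x0; move: hxq; rewrite x0 mulr0 => /eqP; rewrite eq_sym oner_eq0.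
have hg1 : gamma ^+ j1 * x = 1.
  have e : (j1 + j0 = t)%N by rewrite j1v subnK // ltnW.
  by rewrite /x -exprD e (prim_expr_order hgamma).
have gx : gamma ^+ j1 = x ^+ q by apply: (mulIf xn0); rewrite hg1 hxq.
have gxq : (gamma ^+ j1) ^+ q = x.
  apply: (mulIf (x := gamma ^+ j1)); first by rewrite gx expf_neq0.
  by rewrite gamma_t mulrC hg1.
have todd : odd t by rewrite addn1 /= oddX negb_or -lt0n hm.
exists j0, j1; split => //.
- apply/eqP => e; have := congr1 (@nat_of_ord _) e; rewrite j1v /= => e'.
  have : t = (j0 + j0)%N by lia.
  by move/(congr1 odd); rewrite todd oddD addbb.
- apply/setP => j; rewrite !inE.
  have -> : [forall k, torus_col m beta gamma j k == DB_shift m beta i k] =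
      (trace_rel m (gamma ^+ j) == beta ^ i).
    apply/forallP/eqP.
      by move=> H; apply/colEq => k; apply/eqP; exact: H k.
    by move/colEq => H k; apply/eqP; exact: H k.
  apply/eqP/orP.
    rewrite -hj0 /trace_rel => h.
    set y := gamma ^+ j in h *.
    have hyq : y ^+ q * y = 1 by exact: gamma_t.
    have : (y + x) * (y + x ^+ q) = 0.
      have e : (y + x) * (y + x ^+ q) = y ^+ 2 + (x + x ^+ q) * y + x ^+ q * x by ring.
      rewrite e -h.
      have e2 : y ^+ 2 + (y + y ^+ q) * y + x ^+ q * x =
        (y ^+ 2) *+ 2 + y ^+ q * y + x ^+ q * x by ring.
      by rewrite e2 hyq hxq (mulrn_pchar chL) add0r (addrr_pchar2 chL).
    move/eqP; rewrite mulf_eq0 !(eq_pchar2 chL) => /orP [] /eqP e.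
      by left; move/eqP: e; rewrite /y /x (eq_prim_root_expr hgamma) !modn_small.
    by right; move/eqP: e; rewrite -gx /y (eq_prim_root_expr hgamma) !modn_small.
  case=> /eqP ->; first by [].
  by rewrite /trace_rel gxq gx addrC.
Qed.

End Main.

Theorem mainTheorem6
  (m : nat) (hm : (1 <= m)%N)
  (L : finFieldType) (hL : #|L| = (2 ^ (2 * m))%N)
  (K : finFieldType) (hK : #|K| = (2 ^ m)%N)
  (f : {rmorphism K -> L})
  (alpha : L) (halpha : (2 ^ (2 * m) - 1)%N.-primitive_root alpha) :
  let s := (2 ^ m - 1)%N in
  let t := (2 ^ m + 1)%N in
  let beta := alpha ^+ t in
  let gamma := alpha ^+ s in
  forall (i : int) (b : K), f b = beta ^ i ->
    ((exists j : 'I_t, torus_col m beta gamma j = DB_shift m beta i)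
       <-> irreducible_poly ('X^2 + b *: 'X + 1 : {poly K}))
    /\
    (irreducible_poly ('X^2 + b *: 'X + 1 : {poly K}) ->
       exists j0 j1 : 'I_t,
         [/\ j0 != j1, (j1 : nat) = ((t - j0) %% t)%N,
             [set j : 'I_t | [forall k, torus_col m beta gamma j k == DB_shift m beta i k]]
               = [set j0; j1]
           & forall j : 'I_t,
               torus_col m beta gamma j = DB_shift m beta i
               <-> trace_rel m (gamma ^+ j) = beta ^ i]).
Proof. exact (@main_sec m hm L hL K hK f alpha halpha). Qed.
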